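(* Let $n\ge1$, $a\in\mathcal{IS}_n$, and consider the semigroup $(\mathcal{IS}_n,*_a)$. Let $x\in\mathcal{IS}_n$. If $\operatorname{dom}(x)\subseteq\operatorname{ran}(a)$, then the $\mathcal{L}$-class of $x$ is $$L_x=\{y\in\mathcal{IS}_n : \operatorname{ran}(y)=\operatorname{ran}(x),\ \operatorname{dom}(y)\subseteq\operatorname{ran}(a)\};$$ otherwise $L_x=\{x\}$.
   Context: $\mathcal{IS}_n$ is the set of all partial injective maps of $N=\{1,\dots,n\}$, including the empty map; $\operatorname{dom}(x)$, $\operatorname{ran}(x)$ denote domain and range. Maps are composed from left to right: $(xy)(i)=y(x(i))$, defined exactly when $i\in\operatorname{dom}(x)$ and $x(i)\in\operatorname{dom}(y)$. For fixed $a\in\mathcal{IS}_n$, $x*_a y:=xay$. Green's relations in a semigroup $S$: with $S^1$ the semigroup $S$ with an identity adjoined, $x\mathcal{L}y$ iff $S^1x=S^1y$, $x\mathcal{R}y$ iff $xS^1=yS^1$, $\mathcal{H}=\mathcal{L}\cap\mathcal{R}$, $\mathcal{D}=\mathcal{L}\circ\mathcal{R}$ (which equals $\mathcal{R}\circ\mathcal{L}$). $L_x,R_x,H_x,D_x$ denote the corresponding classes of $x$, here computed in $(\mathcal{IS}_n,*_a)$. *)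

(* Defs.v *)
(* N = {1,...,n} is modelled by the ordinal type 'I_n. *)
From mathcomp Require Import all_boot.
Set Implicit Arguments. Unset Strict Implicit. Unset Printing Implicit Defensive.

Definition pimap (n : nat) := {ffun 'I_n -> option 'I_n}.

Definition isIS n (x : pimap n) : Prop :=
  forall i j k, x i = Some k -> x j = Some k -> i = j.

Definition dom n (x : pimap n) : {set 'I_n} := [set i | x i != None].
Definition ran n (x : pimap n) : {set 'I_n} := [set j | [exists i, x i == Some j]].

(* composition from left to right: (x y)(i) = y (x i) *)
Definition comp n (x y : pimap n) : pimap n :=
  [ffun i => if x i is Some k then y k else None].

(* sandwich product x *_a y = x a y *)
Definition sand n (a x y : pimap n) : pimap n := comp (comp x a) y.

(* membership in S^1 *_a x, the principal left ideal of x in (IS_n, *_a)^1 *)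
Definition inLideal n (a x z : pimap n) : Prop :=
  z = x \/ exists s, isIS s /\ z = sand a s x.

(* Green's L relation in (IS_n, *_a): S^1 x = S^1 y (as subsets of IS_n) *)
Definition Lrel n (a x y : pimap n) : Prop :=
  forall z, isIS z -> (inLideal a x z <-> inLideal a y z).

(* Main.v *)
Require Import Defs.
From mathcomp Require Import all_boot.
Set Implicit Arguments. Unset Strict Implicit. Unset Printing Implicit Defensive.

Definition Rx n (a x : pimap n) : {set 'I_n} :=
  [set j | [exists m, (m \in ran a) && (x m == Some j)]].

Lemma inran n (x : pimap n) j : (j \in ran x) <-> exists i, x i = Some j.
Proof.
rewrite inE; split; first by move/existsP=> [i /eqP]; exists i.
by move=> [i hi]; apply/existsP; exists i; rewrite hi.
Qed.

Lemma inRx n (a x : pimap n) j :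
  (j \in Rx a x) <-> exists m, m \in ran a /\ x m = Some j.
Proof.
rewrite inE; split; first by move/existsP=> [m /andP [h /eqP e]]; exists m.
by move=> [m [h e]]; apply/existsP; exists m; rewrite h e eqxx.
Qed.

Lemma Rx_sub n (a x : pimap n) : Rx a x \subset ran x.
Proof. by apply/subsetP=> j /inRx [m [_ e]]; apply/inran; exists m. Qed.

Lemma Rx_full n (a x : pimap n) : dom x \subset ran a -> Rx a x = ran x.
Proof.
move=> h; apply/eqP; rewrite eqEsubset Rx_sub /=.
apply/subsetP=> j /inran [i e]; apply/inRx; exists i; split=> //.
by apply: (subsetP h); rewrite inE e.
Qed.

Lemma Rx_dom n (a x : pimap n) : isIS x -> ran x \subset Rx a x -> dom x \subset ran a.
Proof.
move=> hx h; apply/subsetP=> i; rewrite inE; case e: (x i) => [j|] // _.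
have /inRx [m [hm em]] : j \in Rx a x by apply: (subsetP h); apply/inran; exists i.
by rewrite (hx _ _ _ e em).
Qed.

Lemma char n (a x z : pimap n) : isIS x -> isIS z ->
  (exists s, isIS s /\ z = sand a s x) <-> ran z \subset Rx a x.
Proof.
move=> hx hz; split.
  move=> [s [_ ->]]; apply/subsetP=> j /inran [i].
  rewrite /sand /comp !ffunE; case: (s i) => [k|] //.
  case ek: (a k) => [m|] // em; apply/inRx; exists m; split=> //.
  by apply/inran; exists k.
move=> h.
pose s : pimap n := [ffun i => if z i is Some j then
   (if [pick m | x m == Some j] is Some m then [pick k | a k == Some m] else None)
   else None].
have key : forall i j, z i = Some j -> exists m k, x m = Some j /\ a k = Some m /\ s i = Some k.
  move=> i j e.
  have /inRx [m0 [/inran [k0 ek0] em0]] : j \in Rx a x by apply: (subsetP h); apply/inran; exists i.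
  rewrite /s ffunE e; case: pickP => [m /eqP em|]; last by move/(_ m0); rewrite em0 eqxx.
  have em' : m = m0 by apply: (hx _ _ _ em em0).
  case: pickP => [k /eqP ek|]; first by exists m, k.
  by move/(_ k0); rewrite ek0 em' eqxx.
have sN : forall i, z i = None -> s i = None by move=> i e; rewrite /s ffunE e.
clearbody s; exists s; split.
  move=> i i' k e e'.
  case ez: (z i) => [j|]; last by rewrite sN in e.
  case ez': (z i') => [j'|]; last by rewrite sN in e'.
  have [m [k1 [xm [ak si]]]] := key _ _ ez.
  have [m' [k1' [xm' [ak' si']]]] := key _ _ ez'.
  have ekk : k1 = k1' by congruence. subst k1'.
  have emm : m = m' by congruence. subst m'.
  have ejj : j = j' by congruence. subst j'.
  exact: hz _ _ _ ez ez'.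
apply/ffunP=> i; rewrite /sand /comp !ffunE.
case ez: (z i) => [j|]; last by rewrite sN.
have [m [k [xm [ak ->]]]] := key _ _ ez.
by rewrite ak xm.
Qed.

Lemma half n (a x y z : pimap n) : isIS x -> isIS y -> isIS z ->
  (x = y \/ ran x \subset Rx a y) -> inLideal a x z -> inLideal a y z.
Proof.
move=> hx hy hz [<-|h] //; right; apply/(char _ hy hz).
case: H => [->|hs] //.
move/(char _ hx hz): hs => hs.
apply: subset_trans hs _; exact: subset_trans (Rx_sub a x) h.
Qed.

Lemma Lchar n (a x y : pimap n) : isIS x -> isIS y ->
  Lrel a x y <-> ((x = y \/ ran x \subset Rx a y) /\ (y = x \/ ran y \subset Rx a x)).
Proof.
move=> hx hy; split.
  move=> hL; split.
    have [->|hs] : inLideal a y x by apply/(hL x hx); left.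
      by left.
    by right; apply/(char _ hy hx).
  have [->|hs] : inLideal a x y by apply/(hL y hy); left.
    by left.
  by right; apply/(char _ hx hy).
move=> [h1 h2] z hz; split; [exact: half h1 | exact: half h2].
Qed.

Theorem theorem4 (n : nat) (hn : 1 <= n) (a x : pimap n) :
  isIS a -> isIS x ->
  forall y : pimap n, isIS y ->
    (Lrel a x y <->
     (if dom x \subset ran a
      then ran y = ran x /\ dom y \subset ran a
      else y = x)).
Proof.
move=> ha hx y hy; apply: iff_trans (Lchar a hx hy) _.
case: ifP => hd.
  rewrite (Rx_full hd); split.
    move=> [[exy|h1] [eyx|h2]]; try (subst y; by split).
    have e : ran y = ran x.
      apply/eqP; rewrite eqEsubset h2 /=.
      exact: subset_trans h1 (Rx_sub a y).
    split=> //; apply: Rx_dom hy _; rewrite e //.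
  move=> [e hdy]; rewrite (Rx_full hdy) e; split; right; exact: subxx.
split; last by move=> ->; split; left.
move=> [[exy|h1] [eyx|h2]]; try by [rewrite eyx | rewrite exy].
exfalso; move/negbT: hd; apply/negP/negPn.
apply: Rx_dom hx _.
apply: subset_trans h1 _; apply: subset_trans (Rx_sub a y) h2.
Qed.
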